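(* Let $A\subset\mathbb{Z}$ be an extremal set with cardinality $k$ which is the union of two segments. Then $A$ is Freiman isomorphic of order 2 to one of the following sets: (i) $[0,k+b-1]\setminus[1,b]\subset\mathbb{Z}$ for some $1\le b\le k-3$, with $\dim(A)=1$, $\mathrm{vol}(A)=k+b$ and $|2A|=2k-1+b$; or (ii) $([0,k_1-1]\times\{0\})\cup([0,k_2-1]\times\{1\})\subset\mathbb{Z}^2$ with $k_1+k_2=k$, $k_1,k_2\ge1$, $\dim(A)=2$, $\mathrm{vol}(A)=k$ and $|2A|=3k-3$.
   Context: For integers $x\le y$, $[x,y]=\{n\in\mathbb{Z}:x\le n\le y\}$; $2A=A+A$. Sets $A\subset G$, $B\subset G'$ in abelian groups are Freiman isomorphic of order 2 ($F_2$-isomorphic) if there is a bijection $\phi:A\to B$ with $x+y=z+t\iff\phi(x)+\phi(y)=\phi(z)+\phi(t)$ for all $x,y,z,t\in A$. The dimension $\dim(A)$ is the largest $d$ such that some $B\subset\mathbb{Z}^d$ not contained in a hyperplane is $F_2$-isomorphic to $A$. The volume $\mathrm{vol}(A)$ of a $d$-dimensional set is the minimum of $|\mathrm{conv}(B)\cap\mathbb{Z}^d|$ over $B\subset\mathbb{Z}^d$ $F_2$-isomorphic to $A$. Let $\mathrm{vol}(k,T,d)=\max\{\mathrm{vol}(A):A\subset\mathbb{N},|A|=k,|2A|=T,\dim(A)=d\}$; $A$ is extremal if $\mathrm{vol}(A)=\mathrm{vol}(|A|,|2A|,\dim(A))$. A segment is a nonempty set of consecutive integers; $A\subset\mathbb{Z}$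 is the union of $s$ segments if $A=P_1\cup\dots\cup P_s$ with $P_i$ segments of lengths $k_i$, $\max P_i+1<\min P_{i+1}$ for $1\le i<s$, and $k_i>1$ for some $i$. *)

(* Defs.v *)
From HB Require Import structures.
From mathcomp Require Import all_boot all_order all_algebra.
From mathcomp Require Import finmap.
Set Implicit Arguments. Unset Strict Implicit. Unset Printing Implicit Defensive.
Import Order.TTheory GRing.Theory Num.Theory.
Local Open Scope ring_scope.


Definition sumset (G : zmodType) (A : {fset G}) : {fset G} :=
  [fset (x + y)%R | x in A, y in A]%fset.

Definition F2iso (G G' : zmodType) (A : {fset G}) (B : {fset G'}) : Prop :=
  exists phi : G -> G',
    {in A &, injective phi} /\ [fset phi x | x in A]%fset = B /\
    forall x y z t, x \in A -> y \in A -> z \in A -> t \in A ->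
      ((x + y)%R == (z + t)%R) = ((phi x + phi y)%R == (phi z + phi t)%R).

(* Z^d is modelled by 'rV[int]_d; B lies in an affine hyperplane
   {p | a . p = c} with a <> 0 (rational coefficients). *)
Definition in_hyperplane (d : nat) (B : {fset 'rV[int]_d}) : Prop :=
  exists (a : 'rV[rat]_d) (c : rat), a != 0 /\
    forall p, p \in B -> \sum_(i < d) a 0 i * (p 0 i)%:~R = c.

(* p lies in the convex hull of B (convex combinations with rational
   weights; for rational points this coincides with the real hull). *)
Definition in_conv (d : nat) (B : {fset 'rV[int]_d}) (p : 'rV[int]_d) : Prop :=
  exists w : 'rV[int]_d -> rat,
    (forall b, b \in B -> 0 <= w b) /\
    \sum_(b <- B) w b = 1 /\
    forall i : 'I_d, \sum_(b <- B) w b * (b 0 i)%:~R = (p 0 i)%:~R.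

Definition conv_lattice_count (d : nat) (B : {fset 'rV[int]_d}) (n : nat) : Prop :=
  exists S : {fset 'rV[int]_d}, (forall p, p \in S <-> in_conv B p) /\ #|` S| = n.

Definition is_dim (G : zmodType) (A : {fset G}) (d : nat) : Prop :=
  (exists B : {fset 'rV[int]_d}, ~ in_hyperplane B /\ F2iso A B) /\
  forall (d' : nat) (B : {fset 'rV[int]_d'}),
    ~ in_hyperplane B -> F2iso A B -> (d' <= d)%N.

Definition is_vol (G : zmodType) (A : {fset G}) (v : nat) : Prop :=
  exists d, is_dim A d /\
    (exists B : {fset 'rV[int]_d}, F2iso A B /\ conv_lattice_count B v) /\
    forall (B : {fset 'rV[int]_d}) (n : nat),
      F2iso A B -> conv_lattice_count B n -> (v <= n)%N.

Definition nat_set (A : {fset int}) : Prop := forall x, x \in A -> 0 <= x.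

Definition is_volmax (k T d v : nat) : Prop :=
  (exists A : {fset int}, [/\ nat_set A, #|` A| = k, #|` sumset A| = T,
                             is_dim A d & is_vol A v]) /\
  forall (A : {fset int}) (w : nat), nat_set A -> #|` A| = k ->
    #|` sumset A| = T -> is_dim A d -> is_vol A w -> (w <= v)%N.

Definition extremal (A : {fset int}) : Prop :=
  exists d v, [/\ is_dim A d, is_vol A v & is_volmax #|` A| #|` sumset A| d v].

Definition union_two_segments (A : {fset int}) : Prop :=
  exists a1 b1 a2 b2 : int,
    [/\ a1 <= b1, b1 + 1 < a2, a2 <= b2, (a1 < b1) || (a2 < b2) &
        forall x, (x \in A) = ((a1 <= x <= b1) || (a2 <= x <= b2))].

Definition seg0 (n : nat) : {fset int} := [fset (i%:Z) | i in iota 0 n]%fset.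

Definition set_i (k b : nat) : {fset int} :=
  (seg0 (k + b) `\` [fset (i%:Z) | i in iota 1 b])%fset.

Definition point2 (x y : int) : 'rV[int]_2 :=
  \row_(j < 2) (if j == ord0 then x else y).

Definition set_ii (k1 k2 : nat) : {fset 'rV[int]_2} :=
  ([fset point2 (i%:Z) 0 | i in iota 0 k1] `|` [fset point2 (i%:Z) 1 | i in iota 0 k2])%fset.

(* Main.v *)
Require Import Defs.
From HB Require Import structures.
From mathcomp Require Import all_boot all_order all_algebra.
From mathcomp Require Import finmap zify lra ring.
Import Order.TTheory GRing.Theory Num.Theory.
Set Implicit Arguments. Unset Strict Implicit. Unset Printing Implicit Defensive.
Local Open Scope ring_scope.

Definition zseg (a : int) (n : nat) : {fset int} := [fset (a + i%:Z)%R | i in iota 0 n]%fset.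

Lemma in_zseg a n x : (x \in zseg a n) = (a <= x < a + n%:Z).
Proof.
apply/imfsetP/idP => /=.
  case=> i; rewrite mem_iota => /andP [_ hi] ->. lia.
move=> h; exists `|x - a|%N; rewrite ?mem_iota; lia.
Qed.

Lemma card_zseg a n : #|` zseg a n| = n.
Proof.
rewrite card_in_imfset /=; first by rewrite undup_id ?iota_uniq // size_iota.
move=> i j _ _ /=; lia.
Qed.

Lemma card_disjU (T : choiceType) (A B : {fset T}) :
  (forall x, x \in A -> x \in B -> False) -> #|` (A `|` B)%fset| = (#|` A| + #|` B|)%N.
Proof.
move=> h; rewrite cardfsU.
suff -> : (A `&` B)%fset = fset0 by rewrite cardfs0 subn0.
apply/fsetP => x; rewrite in_fsetI in_fset0.
by apply/negP => /andP [h1 h2]; exact: (h x h1 h2).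
Qed.

Lemma sumsetP (G : zmodType) (A : {fset G}) s :
  reflect (exists x y, [/\ x \in A, y \in A & s = x + y]) (s \in sumset A).
Proof.
apply: (iffP (imfset2P _ _ _ _ _)).
  by case=> x hx [y hy ->]; exists x, y.
by case=> x [y [hx hy ->]]; exists x => //; exists y.
Qed.

Lemma F2iso_mem (G G' : zmodType) (A : {fset G}) (phi : G -> G') x :
  x \in A -> phi x \in [fset phi y | y in A]%fset.
Proof. by move=> hx; apply/imfsetP; exists x. Qed.

Lemma F2iso_trans (G1 G2 G3 : zmodType) (A : {fset G1}) (B : {fset G2}) (C : {fset G3}) :
  F2iso A B -> F2iso B C -> F2iso A C.
Proof.
case=> phi [inj1 [im1 h1]] [psi [inj2 [im2 h2]]].
have mB : forall x, x \in A -> phi x \in B by move=> x hx; rewrite -im1 F2iso_mem.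
exists (psi \o phi); split; [|split].
- by move=> x y hx hy /= /inj2 e; apply: inj1 => //; apply: e; apply: mB.
- rewrite -im2 -im1; apply/fsetP => c; apply/imfsetP/imfsetP => /=.
    by case=> x hx ->; exists (phi x) => //; rewrite F2iso_mem.
  case=> y /imfsetP [x /= hx ->] ->; by exists x.
- move=> x y z t hx hy hz ht /=; rewrite h1 // h2 //; exact: mB.
Qed.

Lemma F2iso_card (G G' : zmodType) (A : {fset G}) (B : {fset G'}) :
  F2iso A B -> #|` A| = #|` B|.
Proof.
case=> phi [inj [im _]]; rewrite -im.
by apply/esym/eqP/card_in_imfsetP.
Qed.

Definition sumlift (G G' : zmodType) (A : {fset G}) (phi : G -> G') (s : G) : G' :=
  match [seq p <- [seq (x, y) | x <- A, y <- A] | p.1 + p.2 == s] with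
  | (x, y) :: _ => phi x + phi y
  | [::] => 0
  end.

Lemma sumliftE (G G' : zmodType) (A : {fset G}) (phi : G -> G') x y :
  (forall x y z t, x \in A -> y \in A -> z \in A -> t \in A ->
      ((x + y) == (z + t)) = ((phi x + phi y) == (phi z + phi t))) ->
  x \in A -> y \in A -> sumlift A phi (x + y) = phi x + phi y.
Proof.
move=> h hx hy; rewrite /sumlift.
have : (x, y) \in [seq p <- [seq (x, y) | x <- A, y <- A] | p.1 + p.2 == x + y].
  by rewrite mem_filter /= eqxx /=; apply/allpairsP; exists (x, y).
case E : [seq _ <- _ | _] => [|[x0 y0] l] //= _.
have : (x0, y0) \in [seq p <- [seq (x, y) | x <- A, y <- A] | p.1 + p.2 == x + y].
  by rewrite E mem_head.
rewrite mem_filter /= => /andP [e /allpairsP [[u v] /= [hu hv [] eu ev]]]; subst.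
by apply/eqP; rewrite -h.
Qed.

Lemma F2iso_sumcard (G G' : zmodType) (A : {fset G}) (B : {fset G'}) :
  F2iso A B -> #|` sumset A| = #|` sumset B|.
Proof.
case=> phi [inj [im h]].
have -> : sumset B = [fset sumlift A phi s | s in sumset A]%fset.
  apply/fsetP => s'; apply/sumsetP/imfsetP => /=.
    case=> x' [y' [hx' hy' ->]].
    move: hx' hy'; rewrite -im => /imfsetP [x /= hx ->] /imfsetP [y /= hy ->].
    exists (x + y); first by apply/sumsetP; exists x, y.
    by rewrite sumliftE.
  case=> s /sumsetP [x [y [hx hy ->]]] ->.
  exists (phi x), (phi y); rewrite -im !F2iso_mem //; split => //.
  by rewrite sumliftE.
apply/esym/eqP/card_in_imfsetP => s1 s2 /sumsetP [x [y [hx hy ->]]] /sumsetP [z [t [hz ht ->]]].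
by rewrite !sumliftE // => e; apply/eqP; rewrite h // e.
Qed.

Lemma is_dim_iso (G G' : zmodType) (A : {fset G}) (A' : {fset G'}) d :
  F2iso A A' -> F2iso A' A -> is_dim A d -> is_dim A' d.
Proof.
move=> i1 i2 [[B [nh iB]] hd]; split.
  by exists B; split => //; apply: F2iso_trans iB.
move=> d' B' nh' iB'; apply: (hd d' B') => //; exact: F2iso_trans iB'.
Qed.

Lemma is_vol_iso (G G' : zmodType) (A : {fset G}) (A' : {fset G'}) v :
  F2iso A A' -> F2iso A' A -> is_vol A v -> is_vol A' v.
Proof.
move=> i1 i2 [d [hd [[B [iB cB]] hm]]]; exists d; split.
  exact: is_dim_iso hd.
split; first by exists B; split => //; apply: F2iso_trans iB.
move=> B' n iB' cB'; apply: (hm B' n) => //; exact: F2iso_trans iB'.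
Qed.

Lemma is_dim_uniq (G : zmodType) (A : {fset G}) d d' :
  is_dim A d -> is_dim A d' -> d = d'.
Proof.
move=> [[B [nB iB]] hB] [[B' [nB' iB']] hB'].
by apply/eqP; rewrite eqn_leq (hB' _ B) // (hB _ B').
Qed.
Definition F2on (V : zmodType) (A : {fset int}) (phi : int -> V) :=
  forall x y z t, x \in A -> y \in A -> z \in A -> t \in A ->
      ((x + y) == (z + t)) = ((phi x + phi y) == (phi z + phi t)).

Lemma F2_rel (V : zmodType) (A : {fset int}) (phi : int -> V) x y z t :
  F2on A phi -> x \in A -> y \in A -> z \in A -> t \in A -> x + y = z + t ->
  phi x + phi y = phi z + phi t.
Proof. by move=> h hx hy hz ht e; apply/eqP; rewrite -h // e. Qed.

Definition aff (V : lmodType int) (P v : V) (x0 x : int) : V := P + (x - x0) *: v.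

Lemma zmod_aux (V : zmodType) (P a b c : V) :
  P + a + (P + b) - (P + c) = P + (a + b - c).
Proof.
by rewrite opprD (addrACA P a P b) (addrACA (P + P)) addrK.
Qed.

Lemma aff_rel (V : lmodType int) (P v : V) x0 x y z :
  aff P v x0 x + aff P v x0 y - aff P v x0 z = aff P v x0 (x + y - z).
Proof.
rewrite /aff zmod_aux; congr (_ + _).
have -> : x + y - z - x0 = (x - x0) + (y - x0) - (z - x0) by ring.
by rewrite -scalerDl -scalerBl.
Qed.

Lemma aff_step (V : lmodType int) (A : {fset int}) (phi : int -> V) P v x0 w x y z :
  F2on A phi -> w \in A -> x \in A -> y \in A -> z \in A -> w + z = x + y ->
  phi x = aff P v x0 x -> phi y = aff P v x0 y -> phi z = aff P v x0 z ->
  phi w = aff P v x0 w.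
Proof.
move=> h hw hx hy hz e ex ey ez.
have := F2_rel h hw hz hx hy e => e2.
have -> : phi w = phi x + phi y - phi z by rewrite -e2 addrK.
have -> : w = x + y - z by rewrite -e addrK.
by rewrite ex ey ez aff_rel.
Qed.

Lemma aff_up (V : lmodType int) (A : {fset int}) (phi : int -> V) P v x0 lo (L : nat) :
  F2on A phi -> (forall j : nat, (j < L)%N -> lo + j%:Z \in A) ->
  phi lo = aff P v x0 lo -> phi (lo + 1) = aff P v x0 (lo + 1) ->
  forall j : nat, (j < L)%N -> phi (lo + j%:Z) = aff P v x0 (lo + j%:Z).
Proof.
move=> h hA e0 e1.
suff H : forall j : nat, (j.+1 < L)%N ->
    phi (lo + j%:Z) = aff P v x0 (lo + j%:Z) /\
    phi (lo + j.+1%:Z) = aff P v x0 (lo + j.+1%:Z).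
  case=> [|j] hj; first by rewrite addr0.
  by case: (H j hj).
elim=> [|j IH] hj; first by rewrite addr0.
have [IH1 IH2] := IH (ltnW hj); split => //.
apply: (aff_step h (x := lo + j.+1%:Z) (y := lo + j.+1%:Z) (z := lo + j%:Z)) => //; try (apply: hA; lia); lia.
Qed.

Lemma aff_down (V : lmodType int) (A : {fset int}) (phi : int -> V) P v x0 hi (L : nat) :
  F2on A phi -> (forall j : nat, (j < L)%N -> hi - j%:Z \in A) ->
  phi hi = aff P v x0 hi -> phi (hi - 1) = aff P v x0 (hi - 1) ->
  forall j : nat, (j < L)%N -> phi (hi - j%:Z) = aff P v x0 (hi - j%:Z).
Proof.
move=> h hA e0 e1.
suff H : forall j : nat, (j.+1 < L)%N ->
    phi (hi - j%:Z) = aff P v x0 (hi - j%:Z) /\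
    phi (hi - j.+1%:Z) = aff P v x0 (hi - j.+1%:Z).
  case=> [|j] hj; first by rewrite subr0.
  by case: (H j hj).
elim=> [|j IH] hj; first by rewrite subr0.
have [IH1 IH2] := IH (ltnW hj); split => //.
apply: (aff_step h (x := hi - j.+1%:Z) (y := hi - j.+1%:Z) (z := hi - j%:Z)) => //; try (apply: hA; lia); lia.
Qed.
Lemma kernel_vec (d r : nat) (M : 'M[rat]_(d, r)) :
  (r < d)%N -> exists a : 'rV[rat]_d, a != 0 /\ a *m M = 0.
Proof.
move=> hrd.
have : kermx M != 0.
  rewrite -mxrank_eq0 mxrank_ker; have := rank_leq_col M; lia.
case/matrix0Pn => i [j hij].
exists (row i (kermx M)); split.
  apply/eqP => /matrixP /(_ 0 j); rewrite mxE [RHS]mxE => e.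
  by rewrite e eqxx in hij.
by have := congr1 (row i) (mulmx_ker M); rewrite row_mul row0.
Qed.

Definition dotq d (a : 'rV[rat]_d) (b : 'rV[int]_d) : rat :=
  \sum_(i < d) a 0 i * (b 0 i)%:~R.

Lemma dotqD d (a : 'rV[rat]_d) b c : dotq a (b + c) = dotq a b + dotq a c.
Proof. by rewrite /dotq -big_split /=; apply: eq_bigr => i _; rewrite mxE intrD mulrDr. Qed.

Lemma dotqZ d (a : 'rV[rat]_d) (s : int) b : dotq a (s *: b) = s%:~R * dotq a b.
Proof.
rewrite /dotq mulr_sumr; apply: eq_bigr => i _; rewrite mxE intrM.
by rewrite mulrCA.
Qed.

Lemma dotq0 d (a : 'rV[rat]_d) : dotq a 0 = 0.
Proof. by rewrite /dotq big1 // => i _; rewrite mxE mulr0. Qed.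

Lemma hyp_of_orth d (B : {fset 'rV[int]_d}) (a : 'rV[rat]_d) p v w :
  a != 0 -> dotq a v = 0 -> dotq a w = 0 ->
  (forall b, b \in B -> exists s t : int, b = p + s *: v + t *: w) ->
  in_hyperplane B.
Proof.
move=> a0 av aw hB; exists a, (dotq a p); split => // b /hB [s [t ->]].
by rewrite -/(dotq a _) !dotqD !dotqZ av aw !mulr0 !addr0.
Qed.

Lemma hyp2 d (B : {fset 'rV[int]_d}) p v w :
  (2 < d)%N -> (forall b, b \in B -> exists s t : int, b = p + s *: v + t *: w) ->
  in_hyperplane B.
Proof.
move=> hd hB.
pose M : 'M[rat]_(d, 2) := \matrix_(i, j) (if j == 0 then v 0 i else w 0 i)%:~R.
have [a [a0 aM]] := kernel_vec M hd.
apply: (hyp_of_orth a0 _ _ hB).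
  have := congr1 (fun m : 'M[rat]_(1, 2) => m 0 0) aM; rewrite !mxE => <-.
  by apply: eq_bigr => i _; rewrite mxE.
have := congr1 (fun m : 'M[rat]_(1, 2) => m 0 1) aM; rewrite !mxE => <-.
by apply: eq_bigr => i _; rewrite mxE.
Qed.

Lemma hyp1 d (B : {fset 'rV[int]_d}) p v :
  (1 < d)%N -> (forall b, b \in B -> exists s : int, b = p + s *: v) ->
  in_hyperplane B.
Proof.
move=> hd hB.
pose M : 'M[rat]_(d, 1) := \matrix_(i, j) (v 0 i)%:~R.
have [a [a0 aM]] := kernel_vec M hd.
apply: (hyp_of_orth (v := v) (w := 0) (p := p) a0 _ (dotq0 a)).
  have := congr1 (fun m : 'M[rat]_(1, 1) => m 0 0) aM; rewrite !mxE => <-.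
  by apply: eq_bigr => i _; rewrite mxE.
by move=> b /hB [s ->]; exists s, 0; rewrite scaler0 addr0.
Qed.
Lemma fsum_pick (T : choiceType) (B : {fset T}) b (F : T -> rat) :
  b \in B -> \sum_(x <- B) (if x == b then F x else 0) = F b.
Proof.
move=> hb; rewrite (bigD1_seq b) ?fset_uniq //= eqxx big1 ?addr0 //.
by move=> x /negbTE ->.
Qed.

Lemma card_iota_imfset (T : choiceType) (f : nat -> T) n :
  {in iota 0 n &, injective f} -> #|` [fset f j | j in iota 0 n]%fset| = n.
Proof.
by move=> h; rewrite card_in_imfset //= undup_id ?iota_uniq // size_iota.
Qed.

Lemma iota_imfsetP (T : choiceType) (f : nat -> T) n x :
  x \in [fset f j | j in iota 0 n]%fset -> exists2 j, (j < n)%N & x = f j.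
Proof. by case/imfsetP => j /=; rewrite mem_iota => /andP [_ hj] ->; exists j. Qed.

Lemma in_iota0 j n : (j < n)%N -> j \in iota 0 n.
Proof. by rewrite mem_iota. Qed.

Lemma conv_seg d (B : {fset 'rV[int]_d}) p v (m j : nat) :
  p \in B -> p + m%:Z *: v \in B -> (0 < m)%N -> (j <= m)%N ->
  in_conv B (p + j%:Z *: v).
Proof.
move=> hp hq hm hj; set q := p + m%:Z *: v.
pose al : rat := 1 - j%:R / m%:R; pose be : rat := j%:R / m%:R.
have m0 : (m%:R : rat) != 0 by rewrite pnatr_eq0 -lt0n.
exists (fun x => (if x == p then al else 0) + (if x == q then be else 0)); split; [|split].
- move=> b _; apply: addr_ge0; case: ifP => // _.
    rewrite /al subr_ge0 ler_pdivrMr ?ltr0n // mul1r ler_nat //.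
  by rewrite /be divr_ge0 ?ler0n.
- rewrite big_split /= !fsum_pick //.
  by rewrite /al /be subrK.
- move=> i; under eq_bigr => x _ do rewrite mulrDl (fun_if (fun y => y * _)) (fun_if (fun y => y * _)) !mul0r.
  rewrite big_split /= !fsum_pick // /q /al /be !mxE !intrD !intrM /=.
  field; exact: m0.
Qed.

Lemma conv_pt d (B : {fset 'rV[int]_d}) b : b \in B -> in_conv B b.
Proof.
move=> hb; have := @conv_seg d B b 0 1 0 hb; rewrite !scaler0 !addr0; apply => //.
Qed.

Lemma count_ge_card d (B : {fset 'rV[int]_d}) n :
  conv_lattice_count B n -> (#|` B| <= n)%N.
Proof.
case=> S [hS <-]; apply: fsubset_leq_card; apply/fsubsetP => b hb.
by apply/hS/conv_pt.
Qed.

Lemma scale_inj d (v : 'rV[int]_d) (i j : int) : v != 0 -> i *: v = j *: v -> i = j.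
Proof.
case/matrix0Pn => a [k hk] /matrixP /(_ a k); rewrite !mxE => e.
by apply: (mulIf hk).
Qed.

Lemma count_seg d (B : {fset 'rV[int]_d}) p v (m n : nat) :
  v != 0 -> p \in B -> p + m%:Z *: v \in B -> conv_lattice_count B n -> (m.+1 <= n)%N.
Proof.
move=> v0 hp hq [S [hS <-]].
have -> : m.+1 = #|` [fset (p + j%:Z *: v)%R | j in iota 0 m.+1]%fset|.
  rewrite card_iota_imfset //.
  by move=> i j _ _ /= /addrI /(scale_inj v0) [].
apply: fsubset_leq_card; apply/fsubsetP => x /iota_imfsetP [j hj ->].
move: hj; rewrite ltnS => hj; apply/hS.
case: m hq hj => [|m] hq hj.
  by move: hj; rewrite leqn0 => /eqP ->; rewrite scale0r addr0; apply: conv_pt.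
exact: (conv_seg hp hq).

Qed.

Lemma conv_bounds d (B : {fset 'rV[int]_d}) x i (lo hi : int) :
  (forall b, b \in B -> lo <= b 0 i <= hi) -> in_conv B x -> lo <= x 0 i <= hi.
Proof.
move=> hB [w [w0 [w1 wx]]].
have e := wx i.
have el : (lo%:~R : rat) = \sum_(b <- B) w b * lo%:~R by rewrite -mulr_suml w1 mul1r.
have eh : (hi%:~R : rat) = \sum_(b <- B) w b * hi%:~R by rewrite -mulr_suml w1 mul1r.
rewrite -(ler_int rat) -[(x 0 i <= hi)](ler_int rat) -e el eh.
apply/andP; split; rewrite big_seq [X in _ <= X]big_seq;
  apply: ler_sum => b hb; rewrite ler_wpM2l ?w0 // ler_int;
  by case/andP: (hB b hb).
Qed.

Definition cst1 (x : int) : 'rV[int]_1 := const_mx x.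

Lemma count1 (B : {fset 'rV[int]_1}) lo (m : nat) :
  (forall b, b \in B -> lo <= b 0 ord0 <= lo + m%:Z) -> cst1 lo \in B -> cst1 (lo + m%:Z) \in B ->
  conv_lattice_count B m.+1.
Proof.
move=> hB hlo hhi.
have e : forall j : int, cst1 (lo + j) = cst1 lo + j *: cst1 1.
  by move=> j; apply/matrixP => a b; rewrite !mxE mulr1.
exists [fset (cst1 lo + j%:Z *: cst1 1)%R | j in iota 0 m.+1]%fset; split.
  move=> x; split.
    case/iota_imfsetP => j hj ->; move: hj; rewrite ltnS => hj.
    case: m hhi hB hj => [|m] hhi hB hj.
      by move: hj; rewrite leqn0 => /eqP ->; rewrite scale0r addr0; apply: conv_pt.
    by apply: (conv_seg (m := m.+1)) => //; rewrite -e.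
  move=> /(conv_bounds hB) hx; apply/imfsetP; have z0 : (0 : 'I_1) = ord0 by apply/val_inj.
  rewrite z0 in hx; exists (absz (x ord0 ord0 - lo)%R).
    apply: in_iota0; move: hx; set a := x ord0 ord0; lia.
  rewrite -e; apply/matrixP => a b; rewrite !mxE (ord1 a) (ord1 b); move: hx; set c := x ord0 ord0; lia.
rewrite card_iota_imfset //.
have h1 : cst1 1 != 0 by apply/eqP => /matrixP /(_ 0 0); rewrite !mxE.
by move=> i j _ _ /= /addrI /(scale_inj h1) [].
Qed.
Definition NN (k1 g k2 : nat) : {fset int} := (zseg 0 k1 `|` zseg (k1 + g)%:Z k2)%fset.

Lemma in_NN k1 g k2 x :
  (x \in NN k1 g k2) = ((0 <= x < k1%:Z) || ((k1 + g)%:Z <= x < (k1 + g + k2)%:Z)).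
Proof. rewrite /NN in_fsetU !in_zseg; apply/idP/idP; lia. Qed.

Lemma card_NN k1 g k2 : (1 <= g)%N -> #|` NN k1 g k2| = (k1 + k2)%N.
Proof.
move=> hg; rewrite /NN card_disjU ?card_zseg // => x; rewrite !in_zseg; lia.
Qed.

Lemma in_sumNN k1 g k2 s : (1 <= k1)%N -> (1 <= k2)%N ->
  (s \in sumset (NN k1 g k2)) =
  [|| (0 <= s <= (2 * k1 - 2)%:Z),
      ((k1 + g)%:Z <= s <= (k1 + g + k1 + k2 - 2)%:Z) |
      ((2 * (k1 + g))%:Z <= s <= (2 * (k1 + g) + 2 * k2 - 2)%:Z)].
Proof.
move=> h1 h2; apply/sumsetP/idP.
  by case=> x [y [hx hy ->]]; move: hx hy; rewrite !in_NN; lia.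
move=> hs.
have [r1|] := boolP (s <= (2 * k1 - 2)%:Z).
  have [c|c] := boolP (s <= (k1 - 1)%:Z).
    by exists s, 0; rewrite !in_NN; split; lia.
  by exists (k1 - 1)%:Z, (s - (k1 - 1)%:Z); rewrite !in_NN; split; lia.
move=> r1.
have [r2|r2] := boolP (s <= (k1 + g + k1 + k2 - 2)%:Z).
  have [c|c] := boolP (s - (k1 + g)%:Z <= (k1 - 1)%:Z).
    by exists (s - (k1 + g)%:Z), (k1 + g)%:Z; rewrite !in_NN; split; lia.
  by exists (k1 - 1)%:Z, (s - (k1 - 1)%:Z); rewrite !in_NN; split; lia.
have [c|c] := boolP (s - (k1 + g)%:Z <= (k1 + g + k2 - 1)%:Z).
  by exists (s - (k1 + g)%:Z), (k1 + g)%:Z; rewrite !in_NN; split; lia.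
by exists (k1 + g + k2 - 1)%:Z, (s - (k1 + g + k2 - 1)%:Z); rewrite !in_NN; split; lia.
Qed.

Lemma sumNN_ii k1 g k2 : (1 <= k1)%N -> (1 <= k2)%N -> (k1 <= g + 1)%N -> (k2 <= g + 1)%N ->
  #|` sumset (NN k1 g k2)| = (3 * (k1 + k2) - 3)%N.
Proof.
move=> h1 h2 h3 h4.
have -> : sumset (NN k1 g k2) =
  (zseg 0 (2 * k1 - 1) `|` zseg (k1 + g)%:Z (k1 + k2 - 1) `|` zseg (2 * (k1 + g))%:Z (2 * k2 - 1))%fset.
  apply/fsetP => s; rewrite in_sumNN // !in_fsetU !in_zseg; apply/idP/idP; lia.
rewrite !card_disjU ?card_zseg; first lia.
  by move=> x; rewrite !in_zseg; lia.
by move=> x; rewrite in_fsetU !in_zseg; lia.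
Qed.

Lemma sumNN_i1 k1 g k2 : (1 <= k1)%N -> (1 <= k2)%N -> (g + 1 <= k1)%N -> (g + 2 <= k2)%N ->
  #|` sumset (NN k1 g k2)| = (2 * (k1 + k2) - 1 + 2 * g)%N.
Proof.
move=> h1 h2 h3 h4.
have -> : sumset (NN k1 g k2) = zseg 0 (2 * (k1 + k2) - 1 + 2 * g).
  apply/fsetP => s; rewrite in_sumNN // !in_zseg; apply/idP/idP; lia.
by rewrite card_zseg.
Qed.

Lemma sumNN_i2 k1 g k2 : (1 <= k1)%N -> (1 <= k2)%N -> (k1 <= g)%N -> (g + 2 <= k2)%N ->
  #|` sumset (NN k1 g k2)| = (2 * (k1 + k2) - 1 + (k1 + g - 1))%N.
Proof.
move=> h1 h2 h3 h4.
have -> : sumset (NN k1 g k2) =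
  (zseg 0 (2 * k1 - 1) `|` zseg (k1 + g)%:Z (k1 + g + 2 * k2 - 1))%fset.
  apply/fsetP => s; rewrite in_sumNN // !in_fsetU !in_zseg; apply/idP/idP; lia.
rewrite !card_disjU ?card_zseg; first lia.
by move=> x; rewrite !in_zseg; lia.
Qed.

Lemma F2iso_aff (A B : {fset int}) (s c : int) :
  (s = 1 \/ s = -1) -> [fset (s * x + c)%R | x in A]%fset = B -> F2iso A B.
Proof.
move=> hs hB; exists (fun x => s * x + c); split; [|split] => //.
  by move=> x y _ _ /=; case: hs => ->; lia.
by move=> x y z t _ _ _ _; case: hs => ->; apply/idP/idP; lia.
Qed.

Lemma normalize A : union_two_segments A ->
  exists k1 g k2 : nat, [/\ (1 <= k1)%N, (k1 <= k2)%N, (2 <= k2)%N, (1 <= g)%N &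
    F2iso A (NN k1 g k2) /\ F2iso (NN k1 g k2) A].
Proof.
case=> a1 [b1 [a2 [b2 [h1 h2 h3 h4 hA]]]].
pose K1 := absz (b1 - a1 + 1)%R; pose G := absz (a2 - b1 - 1)%R; pose K2 := absz (b2 - a2 + 1)%R.
have [le|lt] := leqP K1 K2.
  exists K1, G, K2; split; try lia; split.
    apply: (F2iso_aff (s := 1) (c := - a1)); first by left.
    apply/fsetP => y; apply/imfsetP/idP => /=.
      by case=> x; rewrite hA in_NN => hx ->; lia.
    by rewrite in_NN => hy; exists (y + a1); rewrite ?hA; lia.
  apply: (F2iso_aff (s := 1) (c := a1)); first by left.
  apply/fsetP => y; apply/imfsetP/idP => /=.
    by case=> x; rewrite hA in_NN => hx ->; lia.
  by rewrite hA => hy; exists (y - a1); rewrite ?in_NN; lia.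
exists K2, G, K1; split; try lia; split.
  apply: (F2iso_aff (s := -1) (c := b2)); first by right.
  apply/fsetP => y; apply/imfsetP/idP => /=.
    by case=> x; rewrite hA in_NN => hx ->; lia.
  by rewrite in_NN => hy; exists (b2 - y); rewrite ?hA; lia.
apply: (F2iso_aff (s := -1) (c := b2)); first by right.
apply/fsetP => y; apply/imfsetP/idP => /=.
  by case=> x; rewrite hA in_NN => hx ->; lia.
by rewrite hA => hy; exists (b2 - y); rewrite ?in_NN; lia.
Qed.
Definition E1 (A : {fset int}) : {fset 'rV[int]_1} := [fset cst1 x | x in A]%fset.

Lemma cst1D x y : cst1 x + cst1 y = cst1 (x + y).
Proof. by apply/matrixP => i j; rewrite !mxE. Qed.

Lemma cst1_inj : injective cst1.
Proof. by move=> x y /matrixP /(_ 0 0); rewrite !mxE. Qed.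

Lemma F2iso_E1 A : F2iso A (E1 A).
Proof.
exists cst1; split; [|split] => //.
  by move=> x y _ _; apply: cst1_inj.
by move=> x y z t _ _ _ _; rewrite !cst1D (inj_eq cst1_inj).
Qed.

Lemma E1_nohyp (A : {fset int}) x y : x \in A -> y \in A -> x != y -> ~ in_hyperplane (E1 A).
Proof.
move=> hx hy nxy [a [c [a0 h]]].
have := h (cst1 x) (F2iso_mem _ hx); have := h (cst1 y) (F2iso_mem _ hy).
rewrite !big_ord1 !mxE => e1 e2.
have : a 0 ord0 * (x - y)%:~R = 0 by rewrite intrB mulrBr e2 e1 subrr.
move/eqP; rewrite mulf_eq0 intr_eq0 subr_eq0 (negbTE nxy) orbF => /eqP a00.
move/negP: a0; apply; apply/eqP/matrixP => i j; rewrite (ord1 i) (ord1 j) mxE.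
exact: a00.
Qed.

Lemma NN_line (V : lmodType int) (phi : int -> V) k1 g k2 :
  (1 <= k1)%N -> (g + 2 <= k2)%N -> F2on (NN k1 g k2) phi ->
  forall x, x \in NN k1 g k2 ->
    phi x = aff (phi (k1 + g)%:Z) (phi ((k1 + g)%:Z + 1) - phi (k1 + g)%:Z) (k1 + g)%:Z x.
Proof.
move=> h1 h2 hF.
set a2 := (k1 + g)%:Z; set P := phi a2; set v := phi (a2 + 1) - P.
have f0 : phi a2 = aff P v a2 a2 by rewrite /aff subrr scale0r addr0.
have f1 : phi (a2 + 1) = aff P v a2 (a2 + 1).
  rewrite /aff (_ : a2 + 1 - a2 = 1); last by ring.
  by rewrite scale1r /v addrCA subrr addr0.
have S2 : forall j : nat, (j < k2)%N -> phi (a2 + j%:Z) = aff P v a2 (a2 + j%:Z).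
  apply: (aff_up hF) => // j hj; rewrite in_NN; lia.
have fk : phi (k1%:Z - 1) = aff P v a2 (k1%:Z - 1).
  apply: (aff_step hF (x := a2) (y := a2) (z := a2 + (g.+1)%:Z)) => //;
    try (rewrite in_NN; lia); try lia.
  by apply: S2; lia.
have S1 : forall j : nat, (j < k1)%N ->
    phi (k1%:Z - 1 - j%:Z) = aff P v a2 (k1%:Z - 1 - j%:Z).
  case: (leqP k1 1) => hk1.
    move=> j hj; have -> : j = 0%N by lia.
    by rewrite subr0.
  have fk2 : phi (k1%:Z - 1 - 1) = aff P v a2 (k1%:Z - 1 - 1).
    apply: (aff_step hF (x := k1%:Z - 1) (y := a2) (z := a2 + 1)) => //;
      try (rewrite in_NN; lia); try lia.
  apply: (aff_down hF) => // j hj; rewrite in_NN; lia.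
move=> x; rewrite in_NN => /orP [hx|hx].
  have -> : x = k1%:Z - 1 - (absz (k1%:Z - 1 - x)%R)%:Z by lia.
  by apply: S1; lia.
have -> : x = a2 + (absz (x - a2)%R)%:Z by rewrite /a2; lia.
by apply: S2; rewrite /a2 in hx *; lia.
Qed.

Lemma line_dim_vol k1 g k2 : (1 <= k1)%N -> (1 <= g)%N -> (g + 2 <= k2)%N ->
  is_dim (NN k1 g k2) 1 /\ is_vol (NN k1 g k2) (k1 + g + k2).
Proof.
move=> h1 hg h2; set a2 := (k1 + g)%:Z.
have m0 : (0 : int) \in NN k1 g k2 by rewrite in_NN; lia.
have ma2 : a2 \in NN k1 g k2 by rewrite in_NN; lia.
have ma21 : a2 + 1 \in NN k1 g k2 by rewrite in_NN; lia.
have mM : ((k1 + g + k2).-1)%:Z \in NN k1 g k2 by rewrite in_NN; lia.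
have hdim : is_dim (NN k1 g k2) 1.
  split.
    exists (E1 (NN k1 g k2)); split; last exact: F2iso_E1.
    by apply: (E1_nohyp m0 ma2); rewrite /a2; lia.
  move=> d' B nh [phi [inj [im hF]]]; case: (leqP d' 1) => // hd; exfalso; apply: nh.
  set v := phi (a2 + 1) - phi a2.
  apply: (hyp1 (p := phi a2 - a2 *: v) (v := v)) => // b.
  rewrite -im => /imfsetP [x hx ->]; exists x.
  by rewrite (NN_line h1 h2 hF hx) /aff -/a2 -/v scalerBl addrA addrAC.
split => //; exists 1%N; split => //; split.
  exists (E1 (NN k1 g k2)); split; first exact: F2iso_E1.
  have e : (k1 + g + k2)%N = ((k1 + g + k2).-1).+1 by lia.
  rewrite e; apply: (count1 (lo := 0)).
  - move=> b /imfsetP [x hx ->]; rewrite mxE; move: hx; rewrite in_NN; lia.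
  - exact: F2iso_mem.
  - by rewrite add0r; apply: F2iso_mem.
move=> B n [phi [inj [im hF]]] hc.
set v := phi (a2 + 1) - phi a2.
have v0 : v != 0.
  apply/eqP => /eqP; rewrite subr_eq0 => /eqP /inj.
  by move=> /(_ ma21 ma2); lia.
have e : (k1 + g + k2)%N = ((k1 + g + k2).-1).+1 by lia.
rewrite e; apply: (count_seg (B := B) (p := phi 0) v0) => //.
- by rewrite -im F2iso_mem.
- rewrite (NN_line h1 h2 hF m0) /aff -/a2 -/v -addrA -scalerDl.
  rewrite (_ : 0 - a2 + _ = ((k1 + g + k2).-1)%:Z - a2); last by ring.
  have := NN_line h1 h2 hF mM; rewrite /aff -/a2 -/v => <-.
  by rewrite -im F2iso_mem.
Qed.
Lemma point2D a b c d : point2 a b + point2 c d = point2 (a + c) (b + d).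
Proof. by apply/matrixP => i j; rewrite !mxE; case: ifP. Qed.

Lemma point2_0 a b : (point2 a b) 0 ord0 = a.
Proof. by rewrite mxE. Qed.

Lemma point2_1 a b : (point2 a b) 0 ord_max = b.
Proof. by rewrite mxE. Qed.

Lemma point2_eq a b c d : (point2 a b == point2 c d) = (a == c) && (b == d).
Proof.
apply/eqP/andP => [e|[/eqP -> /eqP ->]] //.
split; apply/eqP.
  by have := congr1 (fun m : 'rV[int]_2 => m 0 ord0) e; rewrite !point2_0.
by have := congr1 (fun m : 'rV[int]_2 => m 0 ord_max) e; rewrite !point2_1.
Qed.

Lemma point2E (p : 'rV[int]_2) : p = point2 (p 0 ord0) (p 0 ord_max).
Proof.
apply/matrixP => i j; rewrite !mxE (ord1 i).
by case: j => [[|[|]]] //= hj; congr (p _ _); apply/val_inj.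
Qed.

Lemma in_pts n (c y : int) :
  (point2 y c \in [fset point2 (i%:Z) c | i in iota 0 n]%fset) = (0 <= y < n%:Z).
Proof.
apply/imfsetP/idP => /=.
  by case=> i; rewrite mem_iota => /andP [_ hi] /eqP; rewrite point2_eq; lia.
move=> h; exists (absz y); first by rewrite mem_iota; lia.
by apply/eqP; rewrite point2_eq; lia.
Qed.

Lemma dot2 (a : 'rV[rat]_2) x y :
  \sum_(i < 2) a 0 i * ((point2 x y) 0 i)%:~R = a 0 ord0 * x%:~R + a 0 ord_max * y%:~R.
Proof. by rewrite big_ord_recr big_ord1 /= !mxE /=; congr (a _ _ * _ + _); apply/val_inj. Qed.

Definition phi2 (a2 : int) (x : int) : 'rV[int]_2 :=
  if x < a2 then point2 x 0 else point2 (x - a2) 1.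

Lemma NN_set_ii k1 g k2 : (1 <= k1)%N -> (1 <= k2)%N -> (k1 <= g + 1)%N -> (k2 <= g + 1)%N ->
  F2iso (NN k1 g k2) (set_ii k1 k2).
Proof.
move=> h1 h2 h3 h4; exists (phi2 (k1 + g)%:Z); split; [|split].
- move=> x y; rewrite !in_NN /phi2 => hx hy.
  by case: ifP; case: ifP => c1 c2 /eqP; rewrite point2_eq; lia.
- apply/fsetP => p; apply/imfsetP/idP => /=.
    case=> x; rewrite in_NN /phi2 /set_ii in_fsetU => hx ->.
    by case: ifP => c; rewrite !in_pts; lia.
  rewrite /set_ii in_fsetU => /orP [] /imfsetP [i /=]; rewrite mem_iota => /andP [_ hi] ->.
    by exists i%:Z; rewrite ?in_NN /phi2 ?ifT //; lia.
  exists ((k1 + g)%:Z + i%:Z); first by rewrite in_NN; lia.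
  by rewrite /phi2 ifF; [congr point2; ring | lia].
- move=> x y z t; rewrite !in_NN /phi2 => hx hy hz ht.
  by case: ifP; case: ifP; case: ifP; case: ifP => c1 c2 c3 c4;
    rewrite !point2D point2_eq; apply/idP/idP; lia.
Qed.

Lemma set_ii_nohyp k1 k2 : (1 <= k1)%N -> (1 <= k2)%N -> (3 <= k1 + k2)%N ->
  ~ in_hyperplane (set_ii k1 k2).
Proof.
move=> h1 h2 h3 [a [c [a0 h]]].
have P : forall x y : int, point2 x y \in set_ii k1 k2 ->
   a 0 ord0 * x%:~R + a 0 ord_max * y%:~R = c.
  by move=> x y /h; rewrite dot2.
have mem : forall x y : int, ((y == 0) && (0 <= x < k1%:Z)) || ((y == 1) && (0 <= x < k2%:Z)) ->
    point2 x y \in set_ii k1 k2.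
  move=> x y /orP [] /andP [/eqP -> hx]; rewrite /set_ii in_fsetU !in_pts; lia.
have e00 : a 0 ord0 * 0%:~R + a 0 ord_max * 0%:~R = c by apply: P; apply: mem; lia.
have e01 : a 0 ord0 * 0%:~R + a 0 ord_max * 1%:~R = c by apply: P; apply: mem; lia.
have c0 : c = 0 by rewrite -e00 !mulr0 addr0.
have a2' : a 0 ord_max = 0 by rewrite -c0 -e01 mulr0 add0r mulr1.
have a1 : a 0 ord0 = 0.
  case: (leqP 2 k1) => hk.
    have := P 1 0; rewrite mulr1 mulr0 addr0 c0; apply; apply: mem; lia.
  have := P 1 1; rewrite !mulr1 a2' c0 addr0; apply; apply: mem; lia.
move/negP: a0; apply; apply/eqP/matrixP => i j; rewrite (ord1 i) mxE.
case: j => [[|[|]]] //= hj.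
  by rewrite -a1; congr (a _ _); apply/val_inj.
by rewrite -a2'; congr (a _ _); apply/val_inj.
Qed.
Lemma conv_lin d (B : {fset 'rV[int]_d}) p i j (al be ga : int) :
  (forall b, b \in B -> al * b 0 i + be * b 0 j <= ga) -> in_conv B p ->
  al * p 0 i + be * p 0 j <= ga.
Proof.
move=> hB [w [w0 [w1 wx]]].
have eg : (ga%:~R : rat) = \sum_(b <- B) w b * ga%:~R by rewrite -mulr_suml w1 mul1r.
rewrite -(ler_int rat) intrD !intrM -wx -wx !mulr_sumr -big_split /= eg.
rewrite big_seq [X in _ <= X]big_seq; apply: ler_sum => b hb.
rewrite mulrCA (mulrCA be%:~R) -mulrDr ler_wpM2l ?w0 //.
by rewrite -!intrM -intrD ler_int hB.
Qed.

Lemma mem_ii k1 k2 (x y : int) :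
  ((y == 0) && (0 <= x < k1%:Z)) || ((y == 1) && (0 <= x < k2%:Z)) ->
  point2 x y \in set_ii k1 k2.
Proof. move=> /orP [] /andP [/eqP -> hx]; rewrite /set_ii in_fsetU !in_pts; lia. Qed.

Lemma set_iiP k1 k2 b : b \in set_ii k1 k2 ->
  exists x c : int, b = point2 x c /\ (((c == 0) && (0 <= x < k1%:Z)) || ((c == 1) && (0 <= x < k2%:Z))).
Proof.
rewrite /set_ii in_fsetU => /orP [] /imfsetP [i /=]; rewrite mem_iota => /andP [_ hi] ->.
  by exists i%:Z, 0; split => //; lia.
by exists i%:Z, 1; split => //; lia.
Qed.

Lemma count_ii k1 k2 : (1 <= k1)%N -> (1 <= k2)%N ->
  conv_lattice_count (set_ii k1 k2) (k1 + k2).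
Proof.
move=> h1 h2; exists (set_ii k1 k2); split.
  move=> p; split; first exact: conv_pt.
  move=> hp.
  have L : forall al be ga : int,
      (forall x c : int, ((c == 0) && (0 <= x < k1%:Z)) || ((c == 1) && (0 <= x < k2%:Z)) ->
         al * x + be * c <= ga) ->
      al * p 0 ord0 + be * p 0 ord_max <= ga.
    move=> al be ga H; apply: (conv_lin _ hp) => b /set_iiP [x [c [-> hxc]]].
    by rewrite point2_0 point2_1; apply: H.
  have b1 := L (-1) 0 0 ltac:(move=> x c /orP [] /andP [/eqP -> ?]; lia).
  have b2 := L 0 1 1 ltac:(move=> x c /orP [] /andP [/eqP -> ?]; lia).
  have b3 := L 0 (-1) 0 ltac:(move=> x c /orP [] /andP [/eqP -> ?]; lia).
  have b4 := L 1 (- (k2 - k1)%N%:Z) (k1%:Z - 1) ltac:(move=> x c /orP [] /andP [/eqP -> ?]; lia).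
  have b5 := L 1 (k1 - k2)%N%:Z (k2%:Z - 1 + (k1 - k2)%N%:Z) ltac:(move=> x c /orP [] /andP [/eqP -> ?]; lia).
  rewrite (point2E p); apply: mem_ii.
  move: b1 b2 b3 b4 b5; set u := p 0 ord0; set t := p 0 ord_max => b1 b2 b3 b4 b5.
  have [] : t = 0 \/ t = 1 by lia.
    by move=> e; rewrite e in b4 b5 *; rewrite ?mulr0 ?mulr1 in b4 b5; lia.
  by move=> e; rewrite e in b4 b5 *; rewrite ?mulr0 ?mulr1 in b4 b5; lia.
have := F2iso_card (NN_set_ii (g := k1 + k2) h1 h2 ltac:(lia) ltac:(lia)).
by rewrite card_NN //; lia.
Qed.

Lemma NN_plane (V : lmodType int) (phi : int -> V) k1 g k2 :
  (1 <= k1)%N -> (2 <= k2)%N -> F2on (NN k1 g k2) phi ->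
  forall x, x \in NN k1 g k2 -> exists s t : int,
    phi x = phi (k1 + g)%:Z + s *: (phi ((k1 + g)%:Z + 1) - phi (k1 + g)%:Z)
            + t *: (phi (k1%:Z - 1) - phi (k1 + g)%:Z).
Proof.
move=> h1 h2 hF.
set a2 := (k1 + g)%:Z; set P := phi a2; set v := phi (a2 + 1) - P; set Q := phi (k1%:Z - 1).
have f0 : phi a2 = aff P v a2 a2 by rewrite /aff subrr scale0r addr0.
have f1 : phi (a2 + 1) = aff P v a2 (a2 + 1).
  rewrite /aff (_ : a2 + 1 - a2 = 1); last by ring.
  by rewrite scale1r /v addrCA subrr addr0.
have S2 : forall j : nat, (j < k2)%N -> phi (a2 + j%:Z) = aff P v a2 (a2 + j%:Z).
  apply: (aff_up hF) => // j hj; rewrite in_NN; lia.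
have S1 : forall j : nat, (j < k1)%N ->
    phi (k1%:Z - 1 - j%:Z) = aff Q v (k1%:Z - 1) (k1%:Z - 1 - j%:Z).
  case: (leqP k1 1) => hk1.
    move=> j hj; have -> : j = 0%N by lia.
    by rewrite subr0 /aff subrr scale0r addr0.
  have fk2 : phi (k1%:Z - 1 - 1) = aff Q v (k1%:Z - 1) (k1%:Z - 1 - 1).
    have e := F2_rel (x := k1%:Z - 1 - 1) (y := a2 + 1) (z := k1%:Z - 1) (t := a2) hF.
    rewrite /aff (_ : k1%:Z - 1 - 1 - (k1%:Z - 1) = -1); last by ring.
    rewrite scaleN1r /v -/Q.
    have -> : phi (k1%:Z - 1 - 1) = Q + P - phi (a2 + 1).
      rewrite -e; first by rewrite addrK.
      all: try (rewrite /a2 in_NN; lia); try (rewrite /a2; lia).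
    by rewrite opprB addrA.
  apply: (aff_down hF) => //.
    by move=> j hj; rewrite in_NN; lia.
  by rewrite /aff subrr scale0r addr0.
move=> x; rewrite in_NN => /orP [hx|hx].
  exists (x - (k1%:Z - 1)), 1.
  have -> : x = k1%:Z - 1 - (absz (k1%:Z - 1 - x)%R)%:Z by lia.
  rewrite S1; last by lia.
  by rewrite /aff scale1r -/P -/v -/Q [RHS]addrAC [P + _]addrCA subrr addr0.
exists (x - a2), 0.
have -> : x = a2 + (absz (x - a2)%R)%:Z by rewrite /a2; lia.
rewrite S2; last by rewrite /a2 in hx *; lia.
by rewrite scale0r addr0.
Qed.

Lemma plane_dim_vol k1 g k2 : (1 <= k1)%N -> (2 <= k2)%N -> (1 <= g)%N ->
  (k1 <= g + 1)%N -> (k2 <= g + 1)%N ->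
  is_dim (NN k1 g k2) 2 /\ is_vol (NN k1 g k2) (k1 + k2).
Proof.
move=> h1 h2 hg h3 h4.
have iso := NN_set_ii h1 (ltnW h2) h3 h4.
have hdim : is_dim (NN k1 g k2) 2.
  split.
    exists (set_ii k1 k2); split => //; apply: set_ii_nohyp => //; lia.
  move=> d' B nh [phi [inj [im hF]]]; case: (leqP d' 2) => // hd; exfalso; apply: nh.
  apply: (hyp2 (p := phi (k1 + g)%:Z) (v := phi ((k1 + g)%:Z + 1) - phi (k1 + g)%:Z)
             (w := phi (k1%:Z - 1) - phi (k1 + g)%:Z)) => // b.
  rewrite -im => /imfsetP [x hx ->].
  exact: (NN_plane h1 h2 hF hx).
split => //; exists 2%N; split => //; split.
  by exists (set_ii k1 k2); split => //; apply: count_ii => //; lia.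
move=> B n iB /count_ge_card; rewrite -(F2iso_card iB) card_NN //.
Qed.
Lemma in_iotaZ m n x :
  (x \in [fset (i%:Z) | i in iota m n]%fset) = ((m%:Z <= x) && (x < (m + n)%:Z)).
Proof.
apply/imfsetP/idP => /=.
  by case=> i; rewrite mem_iota => hi ->; lia.
by move=> h; exists (absz x); rewrite ?mem_iota; lia.
Qed.

Lemma set_i_NN k b : (1 <= k)%N -> set_i k b = NN 1 b (k - 1).
Proof.
move=> hk; apply/fsetP => x.
rewrite /set_i /seg0 in_fsetD !in_iotaZ in_NN; apply/idP/idP; lia.
Qed.

Lemma nat_set_NN k1 g k2 : nat_set (NN k1 g k2).
Proof. by move=> x; rewrite in_NN; lia. Qed.

Unset Implicit Arguments.
Theorem lemma4p4 (A : {fset int}) :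
  extremal A -> union_two_segments A ->
  let k := #|` A| in
  (exists b : nat, [/\ (1 <= b)%N, (b + 3 <= k)%N, F2iso A (set_i k b)
      & [/\ is_dim A 1, is_vol A (k + b) & #|` sumset A| = (2 * k - 1 + b)%N]])
  \/
  (exists k1 k2 : nat, [/\ (1 <= k1)%N, (1 <= k2)%N, (k1 + k2 = k)%N,
      F2iso A (set_ii k1 k2) &
      [/\ is_dim A 2, is_vol A k & #|` sumset A| = (3 * k - 3)%N]]).
Proof.
move=> hext hseg k.
have [k1 [g [k2 [h1 h12 h2 hg [iAN iNA]]]]] := normalize hseg.
have hk : k = (k1 + k2)%N by rewrite /k (F2iso_card iAN) card_NN.
have hsum := F2iso_sumcard iAN.
case: (leqP k2 (g + 1)) => hgk.
  have h3 : (k1 <= g + 1)%N by lia.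
  have iso := NN_set_ii h1 (ltnW h2) h3 hgk.
  have [hd hv] := plane_dim_vol h1 h2 hg h3 hgk.
  right; exists k1, k2; split => //; first lia.
    exact: (F2iso_trans iAN iso).
  split.
  - exact: is_dim_iso iNA iAN hd.
  - by rewrite hk; apply: is_vol_iso iNA iAN hv.
  - by rewrite hsum sumNN_ii //; lia.
have [hd hv] := line_dim_vol h1 hg (ltac:(lia) : (g + 2 <= k2)%N).
have hdA := is_dim_iso iNA iAN hd.
case: (leqP k1 1) => hk1.
  have e1 : k1 = 1%N by lia.
  left; exists g; split => //; first lia.
  - rewrite set_i_NN; last lia.
    by rewrite (_ : (k - 1 = k2)%N); [rewrite -e1 | lia].
  - split => //.
      by rewrite (_ : (k + g = k1 + g + k2)%N); [exact: is_vol_iso iNA iAN hv | lia].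
    by rewrite hsum sumNN_i2 //; lia.
exfalso.
case: hext => d [v [hdA' hvA [_ hmax]]].
have ed := is_dim_uniq hdA' hdA; subst d.
have [d2 [hd2 [[B2 [iB2 cB2]] _]]] := hv.
have e2 := is_dim_uniq hd2 hd; subst d2.
have [d3 [hd3 [_ hmin]]] := hvA.
have e3 := is_dim_uniq hd3 hdA; subst d3.
have vle := hmin B2 _ (F2iso_trans iAN iB2) cB2.
pose b := if (g + 1 <= k1)%N then (2 * g)%N else (k1 + g - 1)%N.
have hb1 : (1 <= b)%N by rewrite /b; case: ifP; lia.
have hb2 : (b + 2 <= k - 1)%N by rewrite /b hk; case: ifP; lia.
have [hd' hv'] := line_dim_vol (k1 := 1) (g := b) (k2 := (k - 1)%N) (leqnn 1) hb1 hb2.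
have hcard : #|` NN 1 b (k - 1)| = #|` A| by rewrite card_NN // -/k; lia.
have hT : #|` sumset (NN 1 b (k - 1))| = #|` sumset A|.
  rewrite hsum sumNN_i2 //; try lia.
  move: hb1 hb2; rewrite /b; case: ifP => c hb1 hb2.
    rewrite sumNN_i1 //; lia.
  rewrite sumNN_i2 //; lia.
have := hmax (NN 1 b (k - 1)) _ (@nat_set_NN 1 b (k - 1)) hcard hT hd' hv'.
move: vle hb1; rewrite /b; case: ifP => c; lia.
Qed.
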